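(* Let $r\geq 2$ be an integer and $C>1$. Let $\epsilon'>0$ be sufficiently small compared to $C^{-3}6^{-r}$ (i.e. $0<\epsilon'<\epsilon_0$ for a suitable $\epsilon_0=\epsilon_0(r,C)>0$), and let $n_0$ be sufficiently large. Let $G$ be a complete $r$-partite graph with parts $X_1,\ldots,X_r$, each of size at least $n_0$, whose edges are colored yellow, pink and white, such that: (1) $|X_1|\geq |X_2|\geq\cdots\geq |X_r|$; (2) $\frac{1}{C}\leq \frac{|X_i|}{|X_j|}\leq C$ for all $i,j\in[r]$; (3) for all $i,j\in[r]$ with $1\leq j<i$ and every $v\in X_i$, the vertex $v$ is incident to at most $\left(\frac{1}{r-1}-\frac{\epsilon' C^3}{r-1}\right)|X_j|$ pink edges going to $X_j$; (4) the total number of yellow edges is at most $\epsilon' 6^{-r}\sum_{1\leq i<j\leq r}|X_i||X_j|$. Then $G$ contains a copy of $K_r$ all of whose edges are white.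
   Context: $[r]=\{1,\ldots,r\}$. $K_r$ denotes the complete graph on $r$ vertices. *)

(* Defs.v *)
From HB Require Import structures.
From mathcomp Require Import all_boot all_order all_algebra.
From mathcomp Require Import reals.
Set Implicit Arguments. Unset Strict Implicit. Unset Printing Implicit Defensive.

Inductive color := Yellow | Pink | White.

Definition color_eqb (a b : color) : bool :=
  match a, b with
  | Yellow, Yellow | Pink, Pink | White, White => true
  | _, _ => false
  end.

Lemma color_eqP : Equality.axiom color_eqb.
Proof. by move=> [] []; constructor. Qed.

HB.instance Definition _ := hasDecEq.Build color color_eqP.

(* A complete r-partite graph is given by a finite vertex type T together with
   a part map [part : T -> 'I_r]; X_i = part^{-1}(i) and u,v are adjacent iff
   part u != part v. An edge colouring is a symmetric map col : T -> T -> color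
   (its values on non-edges are irrelevant). Parts are indexed 0..r-1 instead
   of 1..r. *)

Definition part_set (T : finType) (r : nat) (part : T -> 'I_r) (i : 'I_r) : {set T} :=
  [set v | part v == i].

Definition pink_deg (T : finType) (r : nat) (part : T -> 'I_r)
  (col : T -> T -> color) (v : T) (j : 'I_r) : nat :=
  #|[set u | (part u == j) && (col v u == Pink)]|.

Definition yellow_edges (T : finType) (r : nat) (part : T -> 'I_r)
  (col : T -> T -> color) : nat :=
  #|[set p : T * T | (part p.1 < part p.2)%N && (col p.1 p.2 == Yellow)]|.

Definition has_white_Kr (T : finType) (r : nat) (part : T -> 'I_r)
  (col : T -> T -> color) : Prop :=
  exists f : 'I_r -> T, forall i j : 'I_r, i != j ->
    part (f i) != part (f j) /\ col (f i) (f j) = White.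

(* Main.v *)
Require Import Defs.
From HB Require Import structures.
From mathcomp Require Import all_boot all_order all_algebra.
From mathcomp Require Import reals.
From mathcomp Require Import ring lra zify.
Import Order.TTheory GRing.Theory Num.Theory.
Lemma card_pairs (T : finType) (P : T -> T -> bool) :
  #|[set p : T * T | P p.1 p.2]| = \sum_(v : T) #|[set u | P u v]|.
Proof.
rewrite -sum1_card big_mkcond /=.
have E := (@pair_big _ _ addn T T xpredT xpredT (fun x y : T => if P x y then 1 else 0)).
rewrite /= in E.
rewrite (eq_bigr (fun p : T * T => if P p.1 p.2 then 1 else 0)); last first.
  by move=> p _; rewrite inE.
rewrite -E exchange_big /=; apply: eq_big => // v _.
by rewrite -sum1_card [RHS]big_mkcond /=; apply: eq_big => // u _; rewrite inE.
Qed.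
Lemma card_bigcup_le (T I : finType) (P : pred I) (A : I -> {set T}) :
  (#|\bigcup_(i | P i) A i| <= \sum_(i | P i) #|A i|)%N.
Proof.
apply: (big_ind2 (fun (X : {set T}) (n : nat) => #|X| <= n)%N) => //.
  by rewrite cards0.
move=> X1 n1 X2 n2 h1 h2; apply: leq_trans (leq_of_leqif (leq_card_setU _ _)) _; exact: leq_add.
Qed.
Lemma count_gt (r m : nat) : (#|[set i : 'I_r | m < i]| <= r - m.+1)%N.
Proof.
have -> : #|[set i : 'I_r | (m < i)%N]| = (\sum_(i < r) (m < i : nat))%N.
  rewrite -sum1_card big_mkcond /=; apply: eq_bigr => i _; rewrite inE; by case: (m < i)%N.
rewrite -(big_mkord xpredT (fun i => (m < i : nat))).
elim: r => [|r IH]; first by rewrite big_geq.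
rewrite big_nat_recr //=; case: (ltnP m r) => h /=; lia.
Qed.
Lemma pow6 (r : nat) : (r ^ 4 <= 6 ^ r)%N.
Proof.
elim: r => [|r IH] //.
case: r IH => [|[|[|r]]] IH //.
rewrite expnS; apply: leq_trans (leq_mul (leqnn 6) IH).
nia.
Qed.
Lemma aux3 m x a : (0 < m)%N -> (x <= a.+2 - m.+1)%N -> (x <= a)%N.
Proof. lia. Qed.
Lemma aux1 a b c : (c.+1 <= a)%N -> (a - c.+1 < b)%N -> (a - c <= b)%N.
Proof. lia. Qed.
Local Open Scope ring_scope.
Lemma fin3 (R : realFieldType) (B Sg x N r : R) : B < x -> Sg <= x * r -> N = x * r + x -> B + Sg < N.
Proof. move=> *; lra. Qed.
Lemma fin4 (R : realFieldType) (S B N : R) : N <= S + B -> B < N -> 0 < S.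
Proof. move=> *; lra. Qed.
Lemma arith (R : realFieldType) (b Y eps C n Nm q rr K : R) :
  0 < eps -> 1 < C -> 0 < n -> n <= C * Nm -> 0 < K -> 0 <= b -> 0 <= q ->
  b * (eps * C ^+ 3 / K * (n / C)) <= Y ->
  Y <= eps * q * (rr ^+ 2 * n ^+ 2) ->
  q * (rr ^+ 2 * K ^+ 2) <= 1 ->
  b * K < Nm.
Proof.
move=> he hC hn hN hK hb hq h1 h2 h3.
have C0 : 0 < C by lra.
have hK2 : 0 < K ^+ 2 by rewrite exprn_gt0.
have e1 : b * (eps * C ^+ 3 / K * (n / C)) = (b * K) * (eps * C ^+ 2 * n) / K ^+ 2.
  by field; rewrite ?gt_eqF.
rewrite e1 ler_pdivrMr // in h1.
have h2' : Y * K ^+ 2 <= (eps * n ^+ 2) * (q * (rr ^+ 2 * K ^+ 2)).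
  have -> : (eps * n ^+ 2) * (q * (rr ^+ 2 * K ^+ 2)) = eps * q * (rr ^+ 2 * n ^+ 2) * K ^+ 2 by ring.
  by rewrite ler_wpM2r // ltW.
have h3' : (eps * n ^+ 2) * (q * (rr ^+ 2 * K ^+ 2)) <= eps * n ^+ 2.
  rewrite -[leRHS]mulr1; apply: ler_wpM2l => //.
  by rewrite mulr_ge0 // ?exprn_ge0 // ltW.
have h4 : (b * K) * (eps * C ^+ 2 * n) <= eps * n ^+ 2 by lra.
have h5 : (b * K) * C ^+ 2 <= n.
  have hen : 0 < eps * n by rewrite mulr_gt0.
  rewrite -(ler_pM2r hen).
  have -> : b * K * C ^+ 2 * (eps * n) = (b * K) * (eps * C ^+ 2 * n) by ring.
  have -> : n * (eps * n) = eps * n ^+ 2 by ring.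
  exact: h4.
set x := b * K in h5 *.
have hx : 0 <= x by rewrite mulr_ge0 // ltW.
nra.
Qed.
Theorem lemma3 (R : realType) (r : nat) (C : R) :
  (2 <= r)%N -> 1 < C ->
  exists eps0 : R, 0 < eps0 /\
  forall eps' : R, 0 < eps' -> eps' < eps0 ->
  exists n0 : nat,
  forall (T : finType) (part : T -> 'I_r) (col : T -> T -> color),
    (forall u v, col u v = col v u) ->
    (forall i : 'I_r, (n0 <= #|part_set part i|)%N) ->
    (* (1) *)
    (forall i j : 'I_r, (i <= j)%N -> (#|part_set part j| <= #|part_set part i|)%N) ->
    (* (2) *)
    (forall i j : 'I_r,
        C^-1 <= (#|part_set part i|)%:R / (#|part_set part j|)%:R
        /\ (#|part_set part i|)%:R / (#|part_set part j|)%:R <= C) ->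
    (* (3) *)
    (forall i j : 'I_r, (j < i)%N -> forall v : T, part v = i ->
        (pink_deg part col v j)%:R
          <= ((r.-1)%:R^-1 - eps' * C ^+ 3 / (r.-1)%:R) * (#|part_set part j|)%:R) ->
    (* (4) *)
    (yellow_edges part col)%:R
      <= eps' * (6%:R ^+ r)^-1 *
         \sum_(i < r) \sum_(j < r | (i < j)%N)
            (#|part_set part i|)%:R * (#|part_set part j|)%:R ->
    has_white_Kr part col.
Proof.
case: r => [|[|r']] // _ C1.
exists 1; split; first exact: ltr01.
move=> eps epos _; exists 0%N.
move=> T part col sym _ H1 H2 H3 H4.
rewrite /= in H3.
set rr := r'.+2 in part H1 H2 H3 H4 *.
set K : R := (r'.+1)%:R in H3.
have C0 : 0 < C by lra.
have K0 : 0 < K by rewrite ltr0n.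
pose N (k : 'I_rr) : R := (#|part_set part k|)%:R.
pose o0 : 'I_rr := ord0.
pose n := N o0.
pose d := eps * C ^+ 3 / K.
have d0 : 0 <= d by rewrite /d divr_ge0 ?mulr_ge0 ?exprn_ge0 // ltW.
pose ydeg v (k : 'I_rr) := #|[set u | (part u == k) && (col v u == Yellow)]|.
pose good v := [forall k : 'I_rr, (k < part v)%N ==> ((ydeg v k)%:R < d * N k)].
pose D v := #|[set u | (part u < part v)%N && (col v u == Yellow)]|.
have Npos k : 0 < N k.
  have := (H2 k k).1; rewrite /N.
  case: (posnP #|part_set part k|) => [->|h]; last by rewrite ltr0n.
  rewrite mul0r => h'.
  have : 0 < C^-1 by rewrite invr_gt0.
  lra.
have NgeC k : n <= C * N k.
  have := (H2 o0 k).2; rewrite -/(N k) -/(N o0) ler_pdivrMr //.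

have Nle k : N k <= n.
  by rewrite /n /N ler_nat; apply: H1.
have Ybound : (yellow_edges part col)%:R <= eps * (6%:R ^+ rr)^-1 * (rr%:R ^+ 2 * n ^+ 2).
  apply: (le_trans H4).
  have p6 : 0 < eps * (6%:R ^+ rr)^-1 :> R by rewrite mulr_gt0 // invr_gt0 exprn_gt0.
  rewrite (ler_pM2l p6).
  have E : \sum_(i < rr) \sum_(j < rr | (i < j)%N) N i * N j <= \sum_(i < rr) \sum_(j < rr) n * n.
    apply: ler_sum => i _; rewrite [leLHS]big_mkcond; apply: ler_sum => j _.
    case: ifP => _; last exact: (mulr_ge0 (ltW (Npos o0)) (ltW (Npos o0))).
    exact: (ler_pM (ltW (Npos i)) (ltW (Npos j)) (Nle i) (Nle j)).
  apply: (le_trans E).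
  rewrite (eq_bigr (fun _ => rr%:R * (n * n))); last first.
    by move=> i _; rewrite sumr_const card_ord mulr_natl.
  rewrite sumr_const card_ord -mulr_natl.
  suff -> : rr%:R * 1 * (n * n) *+ rr = (rr%:R * 1) ^+ 2 * n ^+ 2 :> R by exact: lexx.
  by rewrite -mulr_natr; ring.
have Ytot : (yellow_edges part col)%:R = \sum_v (D v)%:R :> R.
  rewrite -natr_sum; congr (_%:R).
  rewrite /yellow_edges (card_pairs T (fun x y => (part x < part y)%N && (col x y == Yellow))).
  apply: eq_bigr => v _; apply: eq_card => u; by rewrite !inE sym.
have qb : (6%:R ^+ rr)^-1 * (rr%:R ^+ 2 * K ^+ 2) <= 1 :> R.
  have hn : (rr ^ 2 * r'.+1 ^ 2 <= 6 ^ rr)%N.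
    apply: leq_trans (pow6 rr); rewrite /rr; nia.
  rewrite -(ler_nat R) natrM !natrX in hn.
  rewrite mulrC ler_pdivrMr ?mul1r //; last by rewrite exprn_gt0 // ltr0n.
have [v0 _] : exists v0 : T, true.
  have : (0 < #|part_set part o0|)%N by rewrite -(ltr0n R); exact: Npos.
  by case/card_gt0P => v0 _; exists v0.
have main : forall d0, (d0 <= rr)%N -> exists f : 'I_rr -> T, forall i : 'I_rr, (rr - d0 <= i)%N ->
    [/\ part (f i) = i, good (f i) & forall j : 'I_rr, (rr - d0 <= j)%N -> i != j -> col (f i) (f j) = White].
  elim=> [_|d1 IH hd].
    by exists (fun _ => v0) => i; rewrite subn0 => hi; have := ltn_ord i; lia.
  have [f Hf] := IH (ltnW hd).
  pose m := (rr - d1.+1)%N.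
  have mlt : (m < rr)%N by rewrite /m; lia.
  pose mo : 'I_rr := Ordinal mlt.
  pose Am := [set i : 'I_rr | (m < i)%N].
  pose Pset i := [set u | (part u == mo) && (col (f i) u == Pink)].
  pose Yset i := [set u | (part u == mo) && (col (f i) u == Yellow)].
  pose Bad := [set v | (part v == mo) && ~~ good v].
  pose S := [set u | [&& part u == mo, good u & [forall i : 'I_rr, (m < i)%N ==> (col (f i) u == White)]]].
  have cover : (#|part_set part mo| <= #|S| + #|Bad| + \sum_(i in Am) (#|Pset i| + #|Yset i|))%N.
    have sub : part_set part mo \subset S :|: Bad :|: \bigcup_(i in Am) (Pset i :|: Yset i).
      apply/subsetP => u; rewrite inE => /eqP pu.
      rewrite !inE pu eqxx /=.
      case g: (good u) => /=; last by [].
      case: (boolP [forall i : 'I_rr, (m < i)%N ==> (col (f i) u == White)]) => [hall|/forallPn [i]].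
        by apply/orP; left; apply/orP; left.
      rewrite negb_imply => /andP [mi cw].
      apply/orP; right; apply/bigcupP; exists i; first by rewrite inE.
      rewrite !inE pu eqxx /=; move: cw; by case: (col (f i) u).
    apply: leq_trans (subset_leq_card sub) _.
    apply: leq_trans (leq_of_leqif (leq_card_setU (S :|: Bad) (\bigcup_(i in Am) (Pset i :|: Yset i)))) _.
    apply: leq_add; first exact: (leq_of_leqif (leq_card_setU S Bad)).
    have hb := card_bigcup_le _ _ (fun i => i \in Am) (fun i => Pset i :|: Yset i).
    apply: (leq_trans hb).
    apply: leq_sum => i _; exact: (leq_of_leqif (leq_card_setU _ _)).
  have coverR : N mo <= (#|S|)%:R + ((#|Bad|)%:R
      + \sum_(i in Am) ((pink_deg part col (f i) mo)%:R + (ydeg (f i) mo)%:R)).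
    rewrite addrA; move: cover; rewrite -(ler_nat R) !natrD natr_sum.
    under eq_bigr do rewrite natrD.
    by move=> h; exact: h.
  have term i : i \in Am ->
      (pink_deg part col (f i) mo)%:R + (ydeg (f i) mo)%:R < N mo / K.
    rewrite inE => mi.
    have hi : (rr - d1 <= i)%N.
      exact: aux1 hd mi.
    have [pf gf _] := Hf i hi.
    have hp := H3 i mo mi (f i) pf.
    have hy : (ydeg (f i) mo)%:R < d * N mo.
      by move/forallP: gf => /(_ mo); rewrite pf mi.
    have e : N mo / K = (K^-1 - eps * C ^+ 3 / K) * N mo + d * N mo.
      by rewrite /d mulrBl subrK mulrC.
    rewrite e; exact: ler_ltD hp hy.
  have sumb : \sum_(i in Am) ((pink_deg part col (f i) mo)%:R + (ydeg (f i) mo)%:R)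
      <= N mo / K * (#|Am|)%:R.
    rewrite mulr_natr -sumr_const; apply: ler_sum => i hi; exact: ltW (term i hi).
  have cAm : (#|Am| <= rr - m.+1)%N by exact: count_gt.
  have Nm0 : 0 < N mo / K by rewrite divr_gt0.
  have ltm : forall j : 'I_rr, (m <= j)%N -> j != mo -> (m < j)%N.
    move=> j hj nj; rewrite ltn_neqAle hj andbT; apply: contra nj => /eqP h.
    by apply/eqP/val_inj => /=; rewrite -h.
  have key : (#|Bad|)%:R + \sum_(i in Am) ((pink_deg part col (f i) mo)%:R + (ydeg (f i) mo)%:R) < N mo.
    case: (posnP m) => m0.
      have B0 : #|Bad| = 0%N.
        apply/eqP; rewrite cards_eq0; apply/eqP/setP => v; rewrite !inE.
        case: (eqVneq (part v) mo) => //= pv; apply: negbF; apply/forallP => k; apply/implyP.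
        by rewrite pv /= m0 ltn0.
      rewrite B0 add0r.
      have o1lt : (1 < rr)%N by [].
      have hs : \sum_(i in Am) ((pink_deg part col (f i) mo)%:R + (ydeg (f i) mo)%:R)
          < N mo / K * (#|Am|)%:R.
        rewrite mulr_natr -sumr_const; apply: ltr_sum; last exact: term.
        by apply/hasP; exists (Ordinal o1lt); rewrite ?mem_index_enum // inE m0.
      apply: (lt_le_trans hs).
      have cA : ((#|Am|)%:R <= K :> R).
        by rewrite ler_nat; move: cAm; rewrite m0 /rr subSS subn0.
      apply: le_trans (ler_wpM2l (ltW Nm0) cA) _.
      by rewrite divfK ?gt_eqF.
    have h1 : (#|Bad|)%:R * (d * (n / C)) <= (yellow_edges part col)%:R.
      rewrite Ytot.
      apply: (@le_trans _ _ (\sum_(v in Bad) (D v)%:R)).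
        rewrite mulr_natl -sumr_const; apply: ler_sum => v; rewrite inE => /andP [/eqP pv ng].
        move/forallPn: ng => [k]; rewrite negb_imply => /andP [kl hk].
        rewrite -leNgt in hk.
        have h2 : d * (n / C) <= d * N k.
          apply: (ler_wpM2l d0); rewrite ler_pdivrMr // mulrC; exact: NgeC k.
        apply: (le_trans h2); apply: (le_trans hk); rewrite ler_nat.
        apply: subset_leq_card; apply/subsetP => u; rewrite !inE => /andP [/eqP pu cu].
        by rewrite pu kl cu.
      rewrite [leRHS](bigID (fun v => v \in Bad)) /= lerDl; apply: sumr_ge0 => v _; exact: ler0n.
    have q0 : 0 <= (6%:R ^+ rr)^-1 :> R by rewrite invr_ge0 exprn_ge0 // ler0n.
    have bK := @arith R _ _ _ _ _ _ _ _ _ epos C1 (Npos o0) (NgeC mo) K0 (ler0n R #|Bad|) q0 h1 Ybound qb.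
    have bK' : (#|Bad|)%:R < N mo / K by rewrite ltr_pdivlMr.
    have cA : ((#|Am|)%:R <= r'%:R :> R).
      rewrite ler_nat; exact: aux3 m0 cAm.
    have s2 := le_trans sumb (ler_wpM2l (ltW Nm0) cA).
    have KE : K = r'%:R + 1 by rewrite /K -natr1.
    have NE : N mo = N mo / K * r'%:R + N mo / K.
      by rewrite -[X in _ * _ + X]mulr1 -mulrDr -KE divfK ?gt_eqF.
    exact: fin3 bK' s2 NE.
  have : 0 < (#|S|)%:R :> R by exact: fin4 coverR key.
  rewrite ltr0n => /card_gt0P [u]; rewrite inE => /and3P [/eqP pu gu /forallP wu].
  exists (fun k => if k == mo then u else f k) => i hi.
  case: (eqVneq i mo) => [-> | ne].
    split => // j hj nj.
    have nj' : j != mo by rewrite eq_sym.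
    rewrite (negbTE nj') sym.
    have mj := ltm j hj nj'.
    by move/implyP: (wu j) => /(_ mj) /eqP.
  have mi := ltm i hi ne.
  have [pf gf wf] := Hf i (@aux1 _ _ _ hd mi).
  split => // j hj nj.
  case: ifP => [_|/negbT nej].
    by move/implyP: (wu i) => /(_ mi) /eqP.
  by apply: wf => //; exact: (@aux1 _ _ _ hd (ltm j hj nej)).
have [f Hf] := main rr (leqnn rr).
exists f => i j ij.
have [pi _ wi] := Hf i (ltac:(by rewrite subnn)).
have [pj _ _] := Hf j (ltac:(by rewrite subnn)).
split; first by rewrite pi pj.
exact: wi j (ltac:(by rewrite subnn)) ij.
Qed.
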